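(* Let $(S,d)$ be a finite metric space, let $f\in\operatorname{ext}(B^S_{\mathrm{BL}})$ and let $x\in S\setminus M_f$. Then there exists $y\in S\setminus\{x\}$ such that $|f(x)-f(y)|=|f|_L\,d(x,y)$.
   Context: $\mathrm{BL}(S)$ is the space of real-valued (bounded Lipschitz) functions on $S$, $|f|_L=\sup_{x\neq y}|f(x)-f(y)|/d(x,y)$, $\|f\|_{\mathrm{BL}}=\|f\|_\infty+|f|_L$, $B^S_{\mathrm{BL}}=\{f\in\mathrm{BL}(S):\|f\|_{\mathrm{BL}}\le1\}$, $\operatorname{ext}$ denotes extreme points, and $M_f=\{x\in S:|f(x)|=\|f\|_\infty\}$. *)

(* Defs.v *)
From HB Require Import structures.
From mathcomp Require Import all_boot all_order all_algebra.
From mathcomp Require Import reals.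
Set Implicit Arguments. Unset Strict Implicit. Unset Printing Implicit Defensive.
Import Order.TTheory GRing.Theory Num.Theory.
Local Open Scope ring_scope.

Definition is_metric (R : realType) (S : finType) (d : S -> S -> R) : Prop :=
  (forall x y, 0 <= d x y) /\
  (forall x y, d x y = 0 <-> x = y) /\
  (forall x y, d x y = d y x) /\
  (forall x y z, d x z <= d x y + d y z).

(* sup norm ||f||_oo = sup_x |f x| (a max over the finite set S; 0 if S empty) *)
Definition sup_norm (R : realType) (S : finType) (f : S -> R) : R :=
  \big[Num.max/0]_(x : S) `|f x|.

(* Lipschitz constant |f|_L = sup_{x <> y} |f x - f y| / d x y
   (a max over finitely many pairs; 0 if there is no such pair) *)
Definition lip_const (R : realType) (S : finType) (d : S -> S -> R) (f : S -> R) : R :=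
  \big[Num.max/0]_(p : S * S | p.1 != p.2) (`|f p.1 - f p.2| / d p.1 p.2).

Definition bl_norm (R : realType) (S : finType) (d : S -> S -> R) (f : S -> R) : R :=
  sup_norm f + lip_const d f.

Definition in_BL_ball (R : realType) (S : finType) (d : S -> S -> R) (f : S -> R) : Prop :=
  bl_norm d f <= 1.

Definition is_extreme_point (R : realType) (S : finType) (B : (S -> R) -> Prop)
    (f : S -> R) : Prop :=
  B f /\
  forall (g h : S -> R) (t : R), B g -> B h -> 0 < t < 1 ->
    (forall s, f s = t * g s + (1 - t) * h s) -> forall s, g s = h s.

Definition norming_set (R : realType) (S : finType) (f : S -> R) (x : S) : Prop :=
  `|f x| = sup_norm f.

(* Main.v *)
Require Import Defs.
From HB Require Import structures.
From mathcomp Require Import all_boot all_order all_algebra.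
From mathcomp Require Import reals.
From Stdlib Require Import Classical.
From mathcomp Require Import lra.
Import Order.TTheory GRing.Theory Num.Theory.
Local Open Scope ring_scope.

Section Aux.
Variables (R : realType) (S : finType) (d : S -> S -> R).
Hypothesis hd : is_metric d.
Variables (f : S -> R) (x : S) (eps : R).
Hypothesis hsup : `|f x| + eps <= sup_norm f.
Hypothesis hlip : forall y, y != x -> `|f x - f y| + eps <= lip_const d f * d x y.
Hypothesis hf : in_BL_ball d f.

Lemma pert_ball (e : R) : `|e| <= eps ->
  in_BL_ball d (fun s => if s == x then f x + e else f s).
Proof.
move=> he; rewrite /in_BL_ball /bl_norm.
apply: le_trans hf; rewrite /bl_norm; apply: lerD.
  rewrite /sup_norm; apply/bigmax_leP; split.
    by apply: le_trans (le_bigmax _ _ x).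
  move=> s _ /=; case: ifP => [/eqP sx|_]; [subst s|]; last exact: (le_bigmax _ (fun s => `|f s|) s).
  apply: le_trans hsup; apply: le_trans (ler_normD _ _) _; exact: lerD.
have [dpos [deq [dsym _]]] := hd.
have dgt : forall a b, a != b -> 0 < d a b.
  move=> a b ab; rewrite lt_def dpos andbT; apply/eqP => /deq /eqP; exact/negP.
rewrite /lip_const; apply/bigmax_leP; split.
  rewrite /lip_const; elim/big_ind: _ => // [a b ha _|p _]; first by rewrite le_max ha.
  by rewrite divr_ge0.

move=> [a b] /= ab.
have key : forall y, y != x -> `|f x + e - f y| / d x y <= lip_const d f.
  move=> y yx; rewrite ler_pdivrMr; last by rewrite dgt // eq_sym.
  apply: le_trans _ (hlip y yx).
  rewrite addrAC; apply: le_trans (ler_normD _ _) _; exact: lerD.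
case: (eqVneq a x) => [ax|ax]; case: (eqVneq b x) => [bx|bx].
- by move: ab; rewrite ax bx eqxx.
- by subst a; exact: key.
- subst b; rewrite -dsym -normrN opprB; exact: key.
- exact: (le_bigmax_cond (j := (a, b)) _ (fun p : S * S => `|f p.1 - f p.2| / d p.1 p.2)).
Qed.
End Aux.

Theorem lemma6p2 (R : realType) (S : finType) (d : S -> S -> R)
  (hd : is_metric d) (f : S -> R)
  (hf : is_extreme_point (in_BL_ball d) f)
  (x : S) (hx : ~ norming_set f x) :
  exists y : S, y != x /\ `|f x - f y| = lip_const d f * d x y.
Proof.
apply: NNPP => hne0; have hne := not_ex_all_not _ _ hne0.
have [dpos [deq [dsym _]]] := hd.
have dgt : forall a b, a != b -> 0 < d a b.
  move=> a b ab; rewrite lt_def dpos andbT; apply/eqP => /deq /eqP; exact/negP.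
set L := lip_const d f.
have hlt : forall y, y != x -> `|f x - f y| < L * d x y.
  move=> y yx; rewrite lt_neqAle; apply/andP; split.
    by apply/eqP => E; apply: (hne y); split.
  have hxy : 0 < d x y by apply: dgt; rewrite eq_sym.
  rewrite -(ler_pdivrMr _ _ hxy).
  rewrite /L /lip_const; apply: (@le_bigmax_cond _ _ _ 0 (x, y) (fun p : S * S => p.1 != p.2) (fun p : S * S => `|f p.1 - f p.2| / d p.1 p.2)) => /=; by rewrite eq_sym.
have hsx : `|f x| < sup_norm f.
  rewrite lt_neqAle; apply/andP; split; first by apply/eqP.
  exact: (le_bigmax _ (fun s => `|f s|) x).
pose gap y := if y == x then sup_norm f - `|f x| else L * d x y - `|f x - f y|.
pose eps := \big[Num.min/(sup_norm f - `|f x|)]_y gap y.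
have epos : 0 < eps.
  rewrite /eps; elim/big_ind: _ => //.
  - by rewrite subr_gt0.
  - by move=> a b a0 b0; rewrite lt_min a0 b0.
  - move=> y _; rewrite /gap; case: eqP => [_|/eqP yx]; rewrite subr_gt0 //; exact: hlt.
have hsup : `|f x| + eps <= sup_norm f.
  have h : eps <= gap x by exact: bigmin_le.
  by move: h; rewrite /gap eqxx => h; lra.
have hlip : forall y, y != x -> `|f x - f y| + eps <= L * d x y.
  move=> y yx; have h : eps <= gap y by exact: bigmin_le.
  by move: h; rewrite /gap (negbTE yx) => h; lra.
have [hB hext] := hf.
have g := @pert_ball R S d hd f x eps hsup hlip hB.
have ge1 : `|eps| <= eps by rewrite ger0_norm // ltW.
have ge2 : `|- eps| <= eps by rewrite normrN ger0_norm // ltW.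
have := hext _ _ (2^-1) (g _ ge1) (g _ ge2) _ _ x.
rewrite eqxx => H.
have E : f x + eps = f x - eps.
  apply: H.
  - apply/andP; split; lra.
  - move=> s; case: ifP => [/eqP ->|_]; lra.
lra.
Qed.
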